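(* Let $0<\delta\le 1$. The mechanism $\mathcal{SA}_\delta$ admits a pure Nash equilibrium for every collection $A$, it is anonymous, and it is $\delta$-Pareto efficient in all equilibria, i.e., for every collection $A$ every pure Nash equilibrium outcome $x$ of $\Gamma_{\mathcal{SA}_\delta}(A)$ is $\delta$-Pareto efficient.
   Context: Two players bargain over a collection (multiset) of $n$ alternatives $A=(a^k)_{k\in[n]}$, $a^k\in[0,1]^2$, $a^k_i$ being player $i$'s utility. A mechanism is a sequence $(M_n)_n$, $M_n$ consisting of signal sets $\Sigma_1(n),\Sigma_2(n)$ and a map $f_n:\Sigma_1(n)\times\Sigma_2(n)\to\Delta([n])$; with risk-neutral players it induces a game $\Gamma_M(A)$ whose payoffs are expected utilities, and the outcome of a profile is its expected utility vector. A mechanism is anonymous if $\Sigma_1(n)=\Sigma_2(n)$ and $f_n(\sigma_1,\sigma_2)=f_n(\sigma_2,\sigma_1)$ for all $n,\sigma_1,\sigma_2$. The mechanism $\mathcal{SA}_\delta$: each player submits $L_i\subseteq[n]$; the index is drawn from $UN([n])$ if $L_1=L_2=\emptyset$; from $UN(L_1\cup L_2)$ if $L_1\cap L_2=\emptyset\ne L_1\cup L_2$; and from $(1-\delta)UN(L_1\cap L_2)+\delta\,UN(L_1\cup L_2)$ if $L_1\cap L_2\ne\emptyset$ ($UN$ = uniform distribution). An allocation $x\in[0,1]^2$ is $\varepsilon$-Pareto efficient (w.r.t. $A$) if there is no $a\in A$ with $a_1>x_1+\varepsilon$ and $a_2>x_2+\varepsilon$. *)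

(* Defs.v *)
From HB Require Import structures.
From mathcomp Require Import all_boot all_order all_algebra.
From mathcomp Require Import reals.
Set Implicit Arguments. Unset Strict Implicit. Unset Printing Implicit Defensive.
Import Order.TTheory GRing.Theory Num.Theory.
Local Open Scope ring_scope.

Section Defs.
Variable R : realType.

(* An alternative a^k in [0,1]^2 ; a collection of n alternatives is
   A : 'I_n -> R * R (a multiset, indexed by [n] = 'I_n). *)
Definition collection_ok n (A : 'I_n -> R * R) : Prop :=
  forall k, 0 <= (A k).1 <= 1 /\ 0 <= (A k).2 <= 1.

(* A mechanism: for each n, signal sets Sigma_1(n), Sigma_2(n) and
   f_n : Sigma_1(n) * Sigma_2(n) -> Delta([n]) (a distribution is given by
   its probability weights 'I_n -> R). *)
Record mechanism := Mechanism {
  sig1 : nat -> Type;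
  sig2 : nat -> Type;
  mech : forall n, sig1 n -> sig2 n -> 'I_n -> R }.

(* Anonymity: Sigma_1(n) = Sigma_2(n) and f_n symmetric. *)
Definition anonymous (M : mechanism) : Prop :=
  exists e : forall n, sig1 M n = sig2 M n,
    forall n (s t : sig1 M n),
      let c := fun x : sig1 M n => eq_rect (sig1 M n) (fun T => T) x (sig2 M n) (e n) in
      mech s (c t) = mech t (c s).

Definition payoff1 (M : mechanism) n (A : 'I_n -> R * R)
  (s1 : sig1 M n) (s2 : sig2 M n) : R :=
  \sum_(k < n) mech s1 s2 k * (A k).1.
Definition payoff2 (M : mechanism) n (A : 'I_n -> R * R)
  (s1 : sig1 M n) (s2 : sig2 M n) : R :=
  \sum_(k < n) mech s1 s2 k * (A k).2.

Definition outcome (M : mechanism) n (A : 'I_n -> R * R)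
  (s1 : sig1 M n) (s2 : sig2 M n) : R * R :=
  (payoff1 A s1 s2, payoff2 A s1 s2).

Definition pure_NE (M : mechanism) n (A : 'I_n -> R * R)
  (s1 : sig1 M n) (s2 : sig2 M n) : Prop :=
  (forall s1' : sig1 M n, payoff1 A s1' s2 <= payoff1 A s1 s2) /\
  (forall s2' : sig2 M n, payoff2 A s1 s2' <= payoff2 A s1 s2).

Definition eps_pareto (eps : R) n (A : 'I_n -> R * R) (x : R * R) : Prop :=
  ~ exists k : 'I_n, x.1 + eps < (A k).1 /\ x.2 + eps < (A k).2.

Definition UN n (S : {set 'I_n}) (k : 'I_n) : R :=
  if k \in S then (#|S|%:R)^-1 else 0.

Definition SA_f (delta : R) n (L1 L2 : {set 'I_n}) (k : 'I_n) : R :=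
  if (L1 == set0) && (L2 == set0) then UN [set: 'I_n] k
  else if L1 :&: L2 == set0 then UN (L1 :|: L2) k
  else (1 - delta) * UN (L1 :&: L2) k + delta * UN (L1 :|: L2) k.

Definition SA (delta : R) : mechanism :=
  @Mechanism (fun n => {set 'I_n}) (fun n => {set 'I_n}) (@SA_f delta).

End Defs.

(* Main.v *)
Require Import Defs.
From mathcomp Require Import all_boot all_order all_algebra reals.
From mathcomp Require Import ring lra.
Import Order.TTheory GRing.Theory Num.Theory.
Local Open Scope ring_scope.
Set Implicit Arguments. Unset Strict Implicit.

Section Aux.
Variable R : realType.
Variable n : nat.
Implicit Types (S U : {set 'I_n}) (f : 'I_n -> R).

Definition avg S f : R := (\sum_(j in S) f j) / #|S|%:R.

Lemma sum_avg S f : S != set0 -> \sum_(j in S) f j = avg S f * #|S|%:R.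
Proof.
move=> S0; rewrite /avg mulfVK // pnatr_eq0 -lt0n card_gt0 //.
Qed.

Lemma card_pos S : S != set0 -> 0 < #|S|%:R :> R.
Proof. by move=> S0; rewrite ltr0n card_gt0. Qed.

Lemma pay_UN S f : \sum_k UN R S k * f k = avg S f.
Proof.
rewrite /avg /UN mulr_suml [RHS]big_mkcond /=; apply: eq_bigr => k _.
by case: (k \in S); rewrite ?mul0r // mulrC.
Qed.

Lemma avg_ub S f m : (forall j, j \in S -> f j <= m) -> 0 <= m -> avg S f <= m.
Proof.
move=> H m0; case: (eqVneq S set0) => [->|S0].
  by rewrite /avg cards0 invr0 mulr0.
rewrite ler_pdivrMr ?card_pos //.
apply: le_trans (ler_sum _ (fun j jS => H j jS)) _.
by rewrite sumr_const mulr_natr.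
Qed.

Lemma avg_ub' S f m : S != set0 -> (forall j, j \in S -> f j <= m) -> avg S f <= m.
Proof.
move=> S0 H; rewrite ler_pdivrMr ?card_pos //.
apply: le_trans (ler_sum _ (fun j jS => H j jS)) _.
by rewrite sumr_const mulr_natr.
Qed.

Lemma avg_ge0 S f : (forall j, 0 <= f j) -> 0 <= avg S f.
Proof.
move=> H; rewrite /avg divr_ge0 //; first by apply: sumr_ge0.
Qed.

Lemma avg1 k f : avg [set k] f = f k.
Proof. by rewrite /avg big_set1 cards1 divr1. Qed.

Lemma avgU1 S f k : k \notin S -> S != set0 ->
  avg (k |: S) f * (#|S|%:R + 1) = f k + avg S f * #|S|%:R.
Proof.
move=> kS S0; have kS0 : k |: S != set0.
  by apply/set0Pn; exists k; rewrite setU11.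
have -> : (#|S|%:R + 1 : R) = #|k |: S|%:R by rewrite cardsU1 kS natrD addrC.
by rewrite -!sum_avg // big_setU1.
Qed.

Lemma avg_cent S U f : S != set0 -> U != set0 ->
  (forall j, j \in S -> j \notin U -> f j <= avg U f) ->
  (forall j, j \in U -> j \notin S -> avg U f <= f j) ->
  avg S f <= avg U f.
Proof.
move=> S0 U0 H1 H2; set t := avg U f.
have hU : \sum_(j in U) (f j - t) = 0.
  by rewrite sumrB sumr_const -mulr_natr -sum_avg // subrr.
have hS : \sum_(j in S) (f j - t) <= 0.
  rewrite -(subr0 (\sum_(j in S) _)) -{2}hU.
  rewrite [X in X - _]big_mkcond [X in _ - X]big_mkcond -sumrB /=; apply: sumr_le0 => j _.
  case jS: (j \in S); case jU: (j \in U); rewrite ?subrr ?sub0r ?subr0 //.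
  - by rewrite subr_le0; apply: H1; rewrite ?jU.
  - by rewrite oppr_le0 subr_ge0; apply: H2; rewrite ?jS.
move: hS; rewrite sumrB sumr_const -mulr_natr subr_le0.
by rewrite ler_pdivrMr ?card_pos.
Qed.

End Aux.

Section Aux2.
Variable R : realType.
Variable n : nat.

Lemma avg_lt (S : {set 'I_n}) (f : 'I_n -> R) m : S != set0 ->
  (forall j, j \in S -> f j < m) -> avg S f < m.
Proof.
move=> S0 H; rewrite ltr_pdivrMr ?card_pos //.
have [j jS] := set0Pn _ S0.
apply: lt_le_trans (ltr_sum _ (fun j jS => H j jS)) _.
  by apply/hasP; exists j => //; rewrite mem_index_enum.
by rewrite sumr_const mulr_natr.
Qed.

Lemma lin_help (a b c m : R) : 0 < m -> a * (m + 1) = c + b * m -> c < a -> a < b.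
Proof. move=> *; nra. Qed.

Lemma avg_rem (U : {set 'I_n}) (f : 'I_n -> R) u : u \notin U -> U != set0 ->
  f u < avg (u |: U) f -> avg (u |: U) f < avg U f.
Proof.
move=> uU U0 lt; exact: (lin_help (card_pos R U0) (avgU1 f uU U0) lt).
Qed.

Lemma avg_add (U : {set 'I_n}) (f : 'I_n -> R) u : u \notin U -> U != set0 ->
  avg U f < f u -> avg U f < avg (u |: U) f.
Proof.
move=> uU U0 lt; have e := avgU1 f uU U0; have m0 := card_pos R U0.
rewrite ltNge; apply/negP => le.
have : avg (u |: U) f * (#|U|%:R + 1) <= avg U f * (#|U|%:R + 1).
  by rewrite ler_wpM2r // ltW // addr_gt0.
rewrite e mulrDr mulr1 => h; move: h lt; clear; move=> *; nra.
Qed.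

End Aux2.
Section Pay.
Variable R : realType.
Variable delta : R.
Variable n : nat.
Implicit Types (S U : {set 'I_n}) (f : 'I_n -> R).

Definition pay (L1 L2 : {set 'I_n}) f := \sum_k SA_f delta L1 L2 k * f k.

Lemma payE (L1 L2 : {set 'I_n}) f : pay L1 L2 f =
  if (L1 == set0) && (L2 == set0) then avg [set: 'I_n] f
  else if L1 :&: L2 == set0 then avg (L1 :|: L2) f
  else (1 - delta) * avg (L1 :&: L2) f + delta * avg (L1 :|: L2) f.
Proof.
rewrite /pay /SA_f; case: ifP => _; first exact: pay_UN.
case: ifP => _; first exact: pay_UN.
under eq_bigr => k _ do rewrite mulrDl -!mulrA.
by rewrite big_split -!mulr_sumr !pay_UN.
Qed.

Lemma SA_fC (L1 L2 : {set 'I_n}) : SA_f delta L1 L2 = SA_f delta L2 L1.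
Proof. by rewrite /SA_f setIC setUC andbC. Qed.

Lemma payC (L1 L2 : {set 'I_n}) f : pay L1 L2 f = pay L2 L1 f.
Proof. by rewrite /pay SA_fC. Qed.

Lemma contra1 (x d y : R) : 0 < d -> x + d < y -> y <= x -> False.
Proof. move=> *; lra. Qed.

Lemma lt_help (x d y : R) : 0 < d -> x + d < y -> x < y.
Proof. move=> *; lra. Qed.

Hypothesis d0 : 0 < delta.
Hypothesis d1 : delta <= 1.

Lemma set1_n0 (k : 'I_n) : ([set k] == set0) = false.
Proof. by apply/negP => /eqP/setP/(_ k); rewrite !inE eqxx. Qed.

Lemma dev1 f (L1 L2 : {set 'I_n}) k : (forall j, 0 <= f j <= 1) ->
  (forall L1', pay L1' L2 f <= pay L1 L2 f) -> pay L1 L2 f + delta < f k ->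
  [/\ L2 != set0, k \notin L2 & (k \in L1) || (L1 == set0)].
Proof.
move=> f01 H Hk; set x := pay L1 L2 f in H Hk.
have f0 j : 0 <= f j by case/andP: (f01 j).
have L2n : L2 != set0.
  apply/negP => /eqP L20; have := H [set k].
  rewrite payE L20 set1_n0 /= setI0 eqxx setU0 avg1 => h; exact: (contra1 d0 Hk h).
have kL2 : k \notin L2.
  apply/negP => kL2; have := H [set k].
  have e1 : [set k] :&: L2 = [set k] by apply/setIidPl; rewrite sub1set.
  rewrite payE set1_n0 /= e1 set1_n0 avg1.
  have h1 : 0 <= delta * avg ([set k] :|: L2) f by rewrite mulr_ge0 ?avg_ge0 // ltW.
  have h2 : 0 <= delta * (1 - f k) by apply: mulr_ge0; [exact: ltW | rewrite subr_ge0; case/andP: (f01 k)].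
  move: h2; rewrite mulrBr mulr1 => h2.
  rewrite mulrBl mul1r; lra.
split => //; case: (boolP (k \in L1)) => //= kL1; apply/negPn/negP => L1n.
set U := L1 :|: L2.
have U0 : U != set0 by apply: contra L2n => /eqP/setP HU; apply/eqP/setP => j; move: (HU j); rewrite !inE orbC; case: (j \in L2).
have kU : k \notin U by rewrite !inE negb_or kL1.
have gain : avg U f < f k -> avg (k |: U) f > avg U f.
  move=> lt; have e := avgU1 f kU U0.
  have m0 := card_pos R U0.
  rewrite ltNge; apply/negP => le.
  have : avg (k |: U) f * (#|U|%:R + 1) <= avg U f * (#|U|%:R + 1).
    by rewrite ler_wpM2r // ltW // addr_gt0.
  rewrite e mulrDr mulr1; lra.
have eU : k |: L1 :|: L2 = k |: U by rewrite setUA.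
have nL1 : (L1 == set0) = false by apply: negbTE.
have nkL1 : (k |: L1 == set0) = false by apply/negP => /eqP/setP/(_ k); rewrite !inE eqxx.
have nL2 : (L2 == set0) = false by apply: negbTE.
case: (eqVneq (L1 :&: L2) set0) => HI.
- have hx : x = avg U f by rewrite /x payE nL1 HI eqxx.
  have HI' : (k |: L1) :&: L2 = set0.
    apply/setP => j; move/setP: HI => /(_ j); rewrite !inE.
    by case: (eqVneq j k) => [->|] //=; rewrite (negbTE kL2).
  have := H (k |: L1); rewrite payE nkL1 HI' eqxx eU -/x hx => le.
  rewrite hx in Hk; have g := gain (lt_help d0 Hk).
  by move: (lt_le_trans g le); rewrite ltxx.
- have HIb : (L1 :&: L2 == set0) = false by apply/negP/negP.
  have hx : x = (1 - delta) * avg (L1 :&: L2) f + delta * avg U f.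
    by rewrite /x payE nL1 HIb.
  case: (ltP (avg U f) (f k)) => hq.
  + have HI' : (k |: L1) :&: L2 = L1 :&: L2.
      apply/setP => j; rewrite !inE.
      by case: (eqVneq j k) => [->|] //=; rewrite (negbTE kL2) (negbTE kL1).
    have := H (k |: L1); rewrite payE nkL1 HI' HIb eU -/x hx => le.
    have := gain hq => g.
    have : delta * avg U f < delta * avg (k |: U) f by rewrite ltr_pM2l.
    by rewrite lerD2l in le; move=> /lt_le_trans/(_ le); rewrite ltxx.
  + have HD : (L1 :\: L2) :&: L2 = set0.
      by apply/setP => j; rewrite !inE; case: (j \in L2); rewrite ?andbF.
    have HU : (L1 :\: L2) :|: L2 = U.
      by apply/setP => j; rewrite !inE; case: (j \in L2); rewrite ?orbT ?orbF ?andbT.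
    have := H (L1 :\: L2); rewrite payE nL2 andbF HD eqxx HU -/x hx => le.
    rewrite hx in Hk; exact: (contra1 d0 Hk (le_trans hq le)).
Qed.

End Pay.

Section Exist.
Variable R : realType.
Variable delta : R.
Hypothesis d0 : 0 < delta.
Hypothesis d1 : delta <= 1.
Variable n : nat.

Lemma best1 f (L1 L2 U : {set 'I_n}) m V :
  L2 != set0 -> U = L1 :|: L2 ->
  (forall j, j \in L2 -> f j <= m) ->
  (forall j, j \notin U -> f j <= avg U f) ->
  (forall j, j \in U -> j \notin L2 -> avg U f <= f j) ->
  avg U f <= V -> (1 - delta) * m + delta * avg U f <= V ->
  forall L1', pay delta L1' L2 f <= V.
Proof.
move=> L20 eU Hm Hout Hin hV1 hV2 L1'.
have U0 : U != set0.
  have [j jL2] := set0Pn _ L20; apply/set0Pn; exists j; by rewrite eU inE jL2 orbT.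
have S0 : L1' :|: L2 != set0.
  have [j jL2] := set0Pn _ L20; apply/set0Pn; exists j; by rewrite inE jL2 orbT.
have hS : avg (L1' :|: L2) f <= avg U f.
  apply: avg_cent => // j.
  - move=> _ jU; apply: Hout => //.
  - move=> jU; rewrite inE negb_or => /andP [_ jL2]; exact: Hin.
rewrite payE (negbTE L20) andbF.
case: ifP => HI; first exact: le_trans hS hV1.
apply: le_trans hV2; apply: lerD.
  apply: ler_wpM2l; first by rewrite subr_ge0.
  apply: avg_ub'; first by rewrite HI.
  by move=> j; rewrite inE => /andP [_ /Hm].
by apply: ler_wpM2l => //; exact: ltW.
Qed.

Variables f1 f2 : 'I_n -> R.
Hypothesis n0 : (0 < n)%N.

Definition Pgood (U : {set 'I_n}) :=
  (U != set0) && [forall j, (j \notin U) ==> (f1 j <= avg U f1) && (f2 j <= avg U f2)].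

Lemma good_exists : exists U, [/\ Pgood U &
  forall u, u \in U -> avg U f1 <= f1 u \/ avg U f2 <= f2 u].
Proof.
have PT : Pgood setT.
  apply/andP; split; last by apply/forallP => j; rewrite inE.
  by apply/set0Pn; exists (Ordinal n0); rewrite inE.
have [U PU Umin] := @arg_minnP _ setT Pgood (fun U => #|U|) PT.
exists U; split => // u uU.
case: (leP (avg U f1) (f1 u)) => h1; first by left.
case: (leP (avg U f2) (f2 u)) => h2; first by right.
exfalso.
move: (PU) => /andP [U0 /forallP Hout].
have eU : U = u |: (U :\ u) by rewrite setD1K.
have uU' : u \notin U :\ u by rewrite !inE eqxx.
case: (eqVneq (U :\ u) set0) => U'0.
  move: h1; rewrite eU U'0 setU0 avg1 ltxx //.
have g1 : avg U f1 < avg (U :\ u) f1.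
  have := @avg_rem _ _ (U :\ u) f1 u uU' U'0; rewrite -eU; exact.
have g2 : avg U f2 < avg (U :\ u) f2.
  have := @avg_rem _ _ (U :\ u) f2 u uU' U'0; rewrite -eU; exact.
have PU' : Pgood (U :\ u).
  apply/andP; split => //; apply/forallP => j; apply/implyP.
  rewrite !inE negb_and negbK; case: (eqVneq j u) => [->|ju] /= jU.
    by rewrite (ltW (lt_trans h1 g1)) (ltW (lt_trans h2 g2)).
  move: (Hout j); rewrite jU /= => /andP [a b].
  by rewrite (le_trans a (ltW g1)) (le_trans b (ltW g2)).
have := Umin _ PU'; rewrite (cardsD1 u U) uU add1n ltnn //.
Qed.

Lemma NE_exists : exists L1 L2 : {set 'I_n},
  (forall L1', pay delta L1' L2 f1 <= pay delta L1 L2 f1) /\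
  (forall L2', pay delta L1 L2' f2 <= pay delta L1 L2 f2).
Proof.
have [U [/andP [U0 /forallP Hout] key]] := good_exists.
set t1 := avg U f1; set t2 := avg U f2.
have out1 j : j \notin U -> f1 j <= t1 by move=> jU; move: (Hout j); rewrite jU => /andP [].
have out2 j : j \notin U -> f2 j <= t2 by move=> jU; move: (Hout j); rewrite jU => /andP [].
set A := [set j in U | t1 <= f1 j].
set B := [set j in U | f1 j < t1].
have eAB : U = A :|: B.
  apply/setP => j; rewrite !inE; case: (j \in U) => //=; by case: leP.
have dm : 0 <= 1 - delta by rewrite subr_ge0.
case: (pickP [pred j | (j \in U) && (t1 <= f1 j) && (t2 <= f2 j)]) => [c0 Hc0|HC].
- have [c Cc cmax] := @arg_maxP _ _ _ c0 [pred j | (j \in U) && (t1 <= f1 j) && (t2 <= f2 j)] f2 Hc0.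
  move: Cc => /= /andP [/andP [cU c1] c2].
  exists A; exists (c |: B).
  have cA : c \in A by rewrite inE cU c1.
  have eU : U = A :|: (c |: B).
    by apply/setP => j; rewrite eAB !inE; case: (eqVneq j c) => [->|]; rewrite ?cU ?c1 //= ?orbF.
  have eI : A :&: (c |: B) = [set c].
    apply/setP => j; rewrite !inE; case: (eqVneq j c) => [->|] /=; first by rewrite cU c1.
    by rewrite andbC; case: (j \in U) => //=; case: leP.
  have nA : (A == set0) = false by apply/negbTE/set0Pn; exists c.
  have nI : (A :&: (c |: B) == set0) = false by rewrite eI set1_n0.
  have nB : c |: B != set0 by apply/set0Pn; exists c; rewrite setU11.
  split.
  + move=> L1'; rewrite [X in _ <= X]payE nA nI eI avg1 -eU.
    apply: (best1 nB eU) => //.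
    * move=> j; rewrite !inE; case: (eqVneq j c) => [->|] //= _ /andP [_ h].
      exact: (ltW (lt_le_trans h c1)).
    * move=> j jU; rewrite !inE negb_or => /andP [_]; rewrite jU /= -leNgt; exact.
    * have : 0 <= (1 - delta) * (f1 c - t1) by rewrite mulr_ge0 // subr_ge0.
      rewrite mulrBr => h; rewrite -subr_ge0.
      have -> : (1 - delta) * f1 c + delta * t1 - t1 = (1 - delta) * f1 c - (1 - delta) * t1.
        by rewrite mulrBl mul1r; ring.
      exact: h.
  + move=> L2'; rewrite [X in _ <= X]payE nA nI eI avg1 -eU payC.
    have eU' : U = (c |: B) :|: A by rewrite setUC.
    apply: (best1 (L1 := c |: B) _ eU') => //.
    * by apply/set0Pn; exists c.
    * move=> j; rewrite !inE => /andP [jU h]; case: (leP t2 (f2 j)) => h2.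
        by apply: (cmax j); rewrite /= jU h h2.
      exact: (ltW (lt_le_trans h2 c2)).
    * move=> j jU; rewrite !inE jU /= -ltNge => h.
      by case: (key j jU) => //; rewrite -/t1 leNgt h.
    * have : 0 <= (1 - delta) * (f2 c - t2) by rewrite mulr_ge0 // subr_ge0.
      rewrite mulrBr => h; rewrite -subr_ge0.
      have -> : (1 - delta) * f2 c + delta * t2 - t2 = (1 - delta) * f2 c - (1 - delta) * t2.
        by rewrite mulrBl mul1r; ring.
      exact: h.
- have C0 j : j \in U -> t1 <= f1 j -> f2 j < t2.
    move=> jU h; move: (HC j) => /=; rewrite jU h /=; by case: leP.
  have nA : A != set0.
    apply/negP => /eqP A0.
    have : t1 < t1.
      apply: avg_lt => // j jU; case: (leP t1 (f1 j)) => // h.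
      by move/setP: A0 => /(_ j); rewrite !inE jU h.
    by rewrite ltxx.
  have nB : B != set0.
    apply/negP => /eqP B0.
    have : t2 < t2.
      apply: avg_lt => // j jU; case: (leP t1 (f1 j)) => h.
        exact: C0.
      by move/setP: B0 => /(_ j); rewrite !inE jU h.
    by rewrite ltxx.
  have eI : A :&: B = set0.
    by apply/setP => j; rewrite !inE; case: (j \in U) => //=; case: leP.
  exists A; exists B; split.
  + move=> L1'; rewrite [X in _ <= X]payE (negbTE nA) eI eqxx -eAB.
    apply: (best1 (m := t1) nB eAB) => //.
    * by move=> j; rewrite inE => /andP [_ /ltW].
    * move=> j jU; rewrite inE jU /= -leNgt; exact.
    * by rewrite mulrBl mul1r subrK.
  + move=> L2'; rewrite [X in _ <= X]payE (negbTE nA) eI eqxx -eAB payC.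
    have eU' : U = B :|: A by rewrite setUC.
    apply: (best1 (m := t2) nA eU') => //.
    * by move=> j; rewrite inE => /andP [jU h]; apply/ltW/C0.
    * move=> j jU; rewrite inE jU /= -ltNge => h.
      by case: (key j jU) => //; rewrite -/t1 leNgt h.
    * by rewrite mulrBl mul1r subrK.
Qed.

End Exist.

Theorem corollary2 (R : realType) (delta : R) :
  0 < delta <= 1 ->
  (forall (n : nat) (A : 'I_n -> R * R), (0 < n)%N -> collection_ok A ->
     exists (L1 L2 : {set 'I_n}), @pure_NE R (SA delta) n A L1 L2) /\
  anonymous (SA delta) /\
  (forall (n : nat) (A : 'I_n -> R * R), (0 < n)%N -> collection_ok A ->
     forall L1 L2 : {set 'I_n}, @pure_NE R (SA delta) n A L1 L2 ->
       eps_pareto delta A (@outcome R (SA delta) n A L1 L2)).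
Proof.
move=> /andP [d0 d1]; split; [|split].
- move=> n A n0 _.
  have [L1 [L2 [h1 h2]]] := @NE_exists R delta d0 d1 n (fun k => (A k).1) (fun k => (A k).2) n0.
  by exists L1, L2; split => s; [exact: h1 | exact: h2].
- exists (fun n => erefl) => n s t /=; exact: SA_fC.
- move=> n A n0 Aok L1 L2 [h1 h2] [k [hk1 hk2]].
  have f01 : forall j, 0 <= (A j).1 <= 1 by move=> j; case: (Aok j).
  have f02 : forall j, 0 <= (A j).2 <= 1 by move=> j; case: (Aok j).
  have [L2n kL2 o1] := @dev1 R delta n d0 (fun j => (A j).1) L1 L2 k f01 h1 hk1.
  have h2' : forall L2', pay delta L2' L1 (fun j => (A j).2) <= pay delta L2 L1 (fun j => (A j).2).
    by move=> L2'; rewrite payC [X in _ <= X]payC; exact: h2.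
  have hk2' : pay delta L2 L1 (fun j => (A j).2) + delta < (A k).2.
    by rewrite payC.
  have [L1n kL1 _] := @dev1 R delta n d0 (fun j => (A j).2) L2 L1 k f02 h2' hk2'.
  by move: o1; rewrite (negbTE kL1) (negbTE L1n).
Qed.
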